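(* For integers $k\ge1$ let $p_k=\int_{\mathbb R}\mathrm{sech}^k(x)\cos(x)\,dx$ and $q_k=\int_{\mathbb R}\mathrm{sech}^k(x)\log(\mathrm{sech}(x))\cos(x)\,dx$. Then \[ q_3=q_1-\tfrac12p_1,\qquad q_5=\tfrac56q_1-\tfrac{29}{72}p_1,\qquad q_7=\tfrac{13}{18}q_1-\tfrac{121}{360}p_1 . \] *)

(* Defs.v *)
From mathcomp Require Import all_boot all_order all_algebra.
From mathcomp Require Import all_classical all_reals all_analysis.
Set Implicit Arguments. Unset Strict Implicit. Unset Printing Implicit Defensive.
Import Order.TTheory GRing.Theory Num.Theory.
Local Open Scope ring_scope.
Local Open Scope classical_set_scope.

Definition sech (R : realType) (x : R) : R := 2 / (expR x + expR (- x)).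

Definition p_ (R : realType) (k : nat) : R :=
  \int[@lebesgue_measure R]_(x in [set: R]) (sech x ^+ k * cos x).

Definition q_ (R : realType) (k : nat) : R :=
  \int[@lebesgue_measure R]_(x in [set: R]) (sech x ^+ k * ln (sech x) * cos x).

(* Main.v *)
Require Import Defs.
From mathcomp Require Import all_boot all_order all_algebra.
From mathcomp Require Import all_classical all_reals all_analysis.
From mathcomp Require Import ring lra.
From mathcomp Require Import measurable_realfun.
Import Order.TTheory GRing.Theory Num.Theory.
Import numFieldNormedType.Exports.
Set Implicit Arguments.
Unset Strict Implicit.
Local Open Scope ring_scope.
Local Open Scope classical_set_scope.

Section S.
Context {R : realType}.
Notation mu := (@lebesgue_measure R).

Definition cs (x : R) := expR x + expR (- x).
Definition th (x : R) := (expR x - expR (- x)) / cs x.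

Lemma expRNK (x : R) : expR x * expR (- x) = 1.
Proof. by rewrite -expRD subrr expR0. Qed.

Lemma cs_gt0 (x : R) : 0 < cs x.
Proof. by rewrite /cs addr_gt0 // expR_gt0. Qed.

Lemma is_derive_expRN (x : R) : is_derive x 1 (fun y => expR (- y)) (- expR (- x)).
Proof.
have := @is_derive1_comp R expR -%R x (expR (- x)) (-1) _ _.
rewrite mulrN1; apply.
Qed.

Lemma is_derive_cs (x : R) : is_derive x 1 cs (expR x - expR (- x)).
Proof.
rewrite /cs.
have := is_deriveD (is_derive_expR x) (is_derive_expRN x).
by [].
Qed.
Lemma sechE (x : R) : sech x = 2 / cs x. Proof. by []. Qed.

Lemma is_derive_sech (x : R) : is_derive x 1 (@sech R) (- (sech x * th x)).
Proof.
have cs0 : cs x != 0 by rewrite gt_eqF // cs_gt0.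
have := is_deriveZ 2 (is_deriveV cs0 (is_derive_cs x)).
have -> : (2 \*: (fun y => (cs y)^-1)) = @sech R.
  by apply/funext => y /=; rewrite /sech /cs.
move=> H; apply: is_derive_eq H _.
rewrite /sech /th -/(cs x) /=. rewrite /GRing.scale /=. field. 
by rewrite cs0.
Qed.

Lemma is_derive_th (x : R) : is_derive x 1 th (sech x ^+ 2).
Proof.
have cs0 : cs x != 0 by rewrite gt_eqF // cs_gt0.
have d1 : is_derive x 1 (fun y => expR y - expR (- y)) (expR x + expR (- x)).
  have := is_deriveB (is_derive_expR x) (is_derive_expRN x).
  by rewrite opprK.
have := is_deriveM d1 (is_deriveV cs0 (is_derive_cs x)).
have -> : ((fun y => expR y - expR (- y)) * (fun y => (cs y)^-1)) = th.
  by apply/funext => y /=.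
move=> H; apply: is_derive_eq H _.
rewrite /sech -/(cs x) /GRing.scale /=.
rewrite /cs in cs0 *.
move: cs0; rewrite expRN => cs0.
have e0 : expR x != 0 by rewrite gt_eqF // expR_gt0.
field.
by rewrite e0 /= gt_eqF // addr_gt0 // mulr_gt0 // expR_gt0.
Qed.

Lemma cvg_half : (fun x : R => x / 2) @ +oo --> +oo.
Proof.
apply/cvgryPge => A; near=> x.
rewrite ler_pdivlMr //.
Unshelve. all: by end_near.
Qed.

Lemma cvg_expRhalf : (fun x : R => expR (- (x / 2))) @ +oo --> 0.
Proof.
apply: (@cvg_comp _ _ _ (fun x : R => x / 2) (fun x => expR (- x))). exact: cvg_half. exact: cvgr_expR.
Qed.

Lemma G (phi Phi : R -> R) (l : R) : (forall x, 0 <= phi x) -> continuous phi ->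
  (forall x, phi (- x) = phi x) ->
  (forall x : R, 0 < x -> is_derive x 1 Phi (phi x)) -> {for 0, continuous Phi} ->
  Phi x @[x --> +oo] --> l ->
  (\int[mu]_x (phi x)%:E = (2 * (l - Phi 0))%:E)%E.
Proof.
move=> p0 cp pe dP cP Pl.
rewrite ge0_symfun_integralT //; last by move=> x /=; rewrite pe.
rewrite -set_itvcy.
rewrite (ge0_continuous_FTC2y (F := Phi) (l := l)).
- by rewrite -EFinB -EFinM.
- by move=> x _; exact: p0.
- exact: continuous_subspaceT.
- exact: Pl.
- by move=> x x0; have [] := dP x x0.
- exact: cvg_at_right_filter.
- move=> x; rewrite in_itv /= andbT => x0.
  by rewrite derive1E; have [_ ->] := dP x x0.
Qed.

Lemma der_cont (f : R -> R) : (forall x, derivable f x 1) -> continuous f.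
Proof. by move=> d x; apply: differentiable_continuous; apply/derivable1_diffP. Qed.

Lemma is_derive_half (x : R) : is_derive x 1 (fun y : R => - (y / 2)) (- 2^-1).
Proof.
have := is_deriveN (is_deriveM (is_derive_id x 1) (is_derive_cst (2^-1 : R) x 1)).
move=> H; apply: is_derive_eq H _.
by rewrite /GRing.scale /= mulr0 add0r mulr1.
Qed.

Definition h (x : R) := expR (- (`|x| / 2)).

Lemma is_derive_eh (x : R) : is_derive x 1 (fun y : R => expR (- (y / 2))) (- 2^-1 * expR (- (x / 2))).
Proof.
have := @is_derive1_comp R expR (fun y => - (y / 2)) x _ _ (is_derive_expR (- (x / 2))) (is_derive_half x).
by move=> H; apply: is_derive_eq H _; rewrite mulrC.
Qed.

Lemma h_ge0 x : 0 <= h x. Proof. exact: expR_ge0. Qed.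
Lemma h_gt0 x : 0 < h x. Proof. exact: expR_gt0. Qed.

Lemma cont_h : continuous h.
Proof.
move=> x; apply: continuous_comp; last exact: continuous_expR.
apply: continuousN; apply: continuousM; last exact: cvg_cst.
exact: norm_continuous.
Qed.

Lemma int_h : (\int[mu]_x (h x)%:E = 4%:E)%E.
Proof.
have hN : forall x, h (- x) = h x by move=> x; rewrite /h normrN.
have dP : forall x : R, 0 < x -> is_derive x 1 (fun x => -2 * expR (- (x / 2))) (h x).
  move=> x x0; have := is_deriveM (is_derive_cst (-2 : R) x 1) (is_derive_eh x).
  move=> H; apply: is_derive_eq H _.
  rewrite /h gtr0_norm // /GRing.scale /=; lra.
have cP : {for 0, continuous (fun x : R => -2 * expR (- (x / 2)))}.
  apply: differentiable_continuous; apply/derivable1_diffP.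
  have := is_deriveM (is_derive_cst (-2 : R) (0 : R) 1) (is_derive_eh 0).
  by case.
have lP : (fun x : R => -2 * expR (- (x / 2))) x @[x --> +oo] --> 0.
  have := cvgM (cvg_cst (-2 : R)) cvg_expRhalf.
  by rewrite mulr0; apply.
rewrite (@G h _ 0 h_ge0 cont_h hN dP cP lP).
congr EFin; rewrite mul0r oppr0 expR0; lra.
Qed.

Lemma integrable_h : mu.-integrable setT (EFin \o h).
Proof.
apply/integrableP; split.
  by apply/measurable_EFinP; apply: continuous_measurable_fun; exact: cont_h.
have -> : (fun x => `|(EFin \o h) x|%E) = (fun x => (h x)%:E).
  by apply/funext => x /=; rewrite ger0_norm // h_ge0.
by rewrite int_h ltry.
Qed.

Lemma int_dom (f : R -> R) (C : R) : continuous f -> (forall x, `|f x| <= C * h x) ->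
  mu.-integrable setT (EFin \o f).
Proof.
move=> cf fC.
have ig : mu.-integrable setT (EFin \o (fun x => C * h x)).
  have := integrableZl measurableT C integrable_h.
  by apply: eq_integrable measurableT _ _ _ => x _ /=; rewrite EFinM.
apply: (le_integrable measurableT _ _ ig).
- by apply/measurable_EFinP; apply: continuous_measurable_fun.
- move=> x _ /=; rewrite lee_fin; apply: le_trans (fC x) _.
  exact: ler_norm.
Qed.

Lemma key (f g g1 g2 : R -> R) (C Cg Cg1 : R) :
  (forall x : R, is_derive x 1 g (g1 x)) -> (forall x : R, is_derive x 1 g1 (g2 x)) ->
  (forall x, f x = (g2 x + g x) * cos x) -> continuous f ->
  (forall x, f (- x) = f x) ->
  (forall x, `|f x| <= C * h x) -> (forall x, `|g x| <= Cg * h x) ->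
  (forall x, `|g1 x| <= Cg1 * h x) -> g1 0 = 0 ->
  \int[mu]_x f x = 0.
Proof.
move=> dg dg1 fE cf fN fC gC g1C g10.
pose K : R := `|C|.
have fK x : `|f x| <= K * h x.
  by apply: le_trans (fC x) _; rewrite ler_wpM2r ?h_ge0 // ler_norm.
pose phi x := f x + K * h x.
pose F x := g1 x * cos x + g x * sin x.
pose Phi x := F x + K * (-2 * expR (- (x / 2))).
have dF (x : R) : is_derive x 1 F (f x).
  have := is_deriveD (is_deriveM (dg1 x) (is_derive_cos x)) (is_deriveM (dg x) (is_derive_sin x)).
  move=> H; apply: is_derive_eq H _.
  rewrite fE /GRing.scale /=; ring.
have dH (x : R) : is_derive x 1 (fun x : R => K * (-2 * expR (- (x / 2)))) (K * expR (- (x / 2))).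
  have := is_deriveM (is_derive_cst K x 1) (is_deriveM (is_derive_cst (-2 : R) x 1) (is_derive_eh x)).
  move=> H; apply: is_derive_eq H _.
  by rewrite /GRing.scale /=; field.
have dPhi (y : R) : is_derive y 1 Phi (f y + K * expR (- (y / 2))).
  exact: is_deriveD (dF y) (dH y).
have cphi : continuous phi.
  move=> x; apply: cvgD; first exact: cf.
  by apply: cvgM; [exact: cvg_cst | exact: cont_h].
have phi0 x : 0 <= phi x.
  rewrite /phi; have := fK x; rewrite ler_norml => /andP[+ _]; lra.
have phiN x : phi (- x) = phi x by rewrite /phi fN /h normrN.
have dPhi' : forall x : R, 0 < x -> is_derive x 1 Phi (phi x).
  move=> x x0; apply: is_derive_eq (dPhi x) _.
  by rewrite /phi /h gtr0_norm.
have cPhi : {for 0, continuous Phi}.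
  apply: differentiable_continuous; apply/derivable1_diffP.
  by have [] := dPhi 0.
have Fl : F x @[x --> +oo] --> 0.
  set M := Cg1 + Cg.
  have hM : M * expR (- (x / 2)) @[x --> +oo] --> 0.
    by have := cvgM (cvg_cst M) cvg_expRhalf; rewrite mulr0; apply.
  have hM' : - (M * expR (- (x / 2))) @[x --> +oo] --> 0.
    by have := cvgN hM; rewrite oppr0; apply.
  apply: (squeeze_cvgr _ hM' hM).
  near=> x.
  have x0 : 0 < x by near: x; apply: nbhs_pinfty_gt.
  have hx : h x = expR (- (x / 2)) by rewrite /h gtr0_norm.
  have : `|F x| <= M * expR (- (x / 2)).
    rewrite -hx /F /M mulrDl.
    apply: le_trans (ler_normD _ _) _.
    apply: lerD; rewrite normrM.
      apply: le_trans (g1C x); rewrite -[leRHS]mulr1.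
      by apply: ler_wpM2l => //; exact: cos_max.
    apply: le_trans (gC x); rewrite -[leRHS]mulr1.
    by apply: ler_wpM2l => //; exact: sin_max.
  by rewrite ler_norml.
have Phil : Phi x @[x --> +oo] --> 0.
  have := cvgD Fl (cvgM (cvg_cst K) (cvgM (cvg_cst (-2 : R)) cvg_expRhalf)).
  by rewrite !mulr0 addr0; apply.
have Iphi := @G phi Phi 0 phi0 cphi phiN dPhi' cPhi Phil.
have iphi : mu.-integrable setT (EFin \o phi).
  apply: (@int_dom phi (C + K)) => // x.
  rewrite mulrDl; apply: le_trans (ler_normD _ _) _.
  apply: lerD => //; rewrite normrM (ger0_norm (h_ge0 x)) ger0_norm //; exact: normr_ge0.
have iKh : mu.-integrable setT (EFin \o (fun x => K * h x)).
  apply: (@int_dom _ K).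
    by move=> y; apply: cvgM; [exact: cvg_cst | exact: cont_h].
  by move=> y; rewrite normrM (ger0_norm (h_ge0 y)) ger0_norm //; exact: normr_ge0.
have -> : \int[mu]_x f x = \int[mu]_x (phi x - K * h x).
  by apply: eq_Rintegral => x _; rewrite /phi addrK.
rewrite RintegralB //.
rewrite RintegralZl //; last exact: integrable_h.
rewrite /Rintegral Iphi int_h /=.
rewrite /Phi /F g10 sin0 cos0 !mul0r oppr0 expR0 mulr0 add0r; ring.
Unshelve. all: by end_near.
Qed.

Definition L (x : R) := ln (sech x).

Lemma sech_gt0 (x : R) : 0 < sech x.
Proof. by rewrite sechE divr_gt0 // cs_gt0. Qed.

Lemma sechN (x : R) : sech (- x) = sech x.
Proof. by rewrite /sech opprK addrC. Qed.

Lemma thN (x : R) : th (- x) = - th x.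
Proof. by rewrite /th /cs opprK (addrC (expR (- x)) (expR x)) -mulNr opprB. Qed.

Lemma LN (x : R) : L (- x) = L x.
Proof. by rewrite /L sechN. Qed.

Lemma th2 (x : R) : th x ^+ 2 = 1 - sech x ^+ 2.
Proof.
rewrite /th sechE /cs expRN.
have e0 : expR x != 0 by rewrite gt_eqF // expR_gt0.
have c0 : expR x + (expR x)^-1 != 0.
  by rewrite gt_eqF // addr_gt0 // ?invr_gt0 expR_gt0.
field.
by rewrite e0 /= gt_eqF // addr_gt0 // mulr_gt0 // expR_gt0.
Qed.

Lemma cs_bounds (x : R) : expR `|x| <= cs x <= 2 * expR `|x|.
Proof.
rewrite /cs; have [x0|x0] := leP 0 x.
  rewrite ger0_norm //.
  have : expR (- x) <= expR x by rewrite ler_expR; lra.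
  have := expR_gt0 (- x); lra.
rewrite ltr0_norm //.
have : expR x <= expR (- x) by rewrite ler_expR; lra.
have := expR_gt0 x; lra.
Qed.

Lemma key_bounds (x : R) :
  [/\ 0 < sech x, sech x <= 1, sech x <= 2 * h x & sech x * `|L x| <= 4 * h x].
Proof.
set a := `|x|.
have a0 : 0 <= a by exact: normr_ge0.
set E := expR (a / 2).
have E1 : 1 + a / 2 <= E by exact: expR_ge1Dx.
have hE : h x = E^-1 by rewrite /h expRN.
have eE : expR a = E ^+ 2 by rewrite /E -expRM_natl; congr expR; rewrite mulr_natl mulr2n; field.
have E0 : 0 < E by exact: expR_gt0.
have /andP[c1 c2] := cs_bounds x.
rewrite -/a eE in c1 c2.
have cs0 := cs_gt0 x.
have s_le : sech x <= 2 / E ^+ 2.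
  by rewrite sechE ler_pdivrMr // mulrAC ler_pdivlMr ?exprn_gt0 //; nra.
have s_ge : 1 / E ^+ 2 <= sech x.
  by rewrite sechE ler_pdivrMr ?exprn_gt0 // mulrAC ler_pdivlMr //; nra.
have sp := sech_gt0 x.
have s1 : sech x <= 1.
  rewrite sechE ler_pdivrMr // mul1r /cs expRN.
  have e0 := expR_gt0 x.
  have ee : expR x * (expR x)^-1 = 1 by rewrite mulfV ?gt_eqF.
  have ie : 0 < (expR x)^-1 by rewrite invr_gt0.
  have := sqr_ge0 (expR x - 1).
  nra.
have Lle : L x <= 0 by exact: ln_le0.
have Lge : - a <= L x.
  rewrite /L -[X in X <= _]expRK ler_ln ?posrE ?expR_gt0 //.
  apply: le_trans s_ge; rewrite expRN eE; lra.
have nL : `|L x| <= a by rewrite ler0_norm //; lra.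
split => //.
  apply: le_trans s_le _; rewrite hE ler_pM2l // lef_pV2 ?posrE ?exprn_gt0 //.
  by rewrite expr2 ler_peMl //; lra.
apply: le_trans (ler_wpM2l (ltW sp) nL) _.
apply: le_trans (ler_wpM2r a0 s_le) _.
rewrite hE.
have aE : a <= 2 * E by lra.
have E0' : E != 0 by rewrite gt_eqF.
rewrite (_ : 2 / E ^+ 2 * a = (2 * a / E) * E^-1); last by field.
rewrite ler_pM2r ?invr_gt0 // ler_pdivrMr //; lra.
Qed.

Lemma is_derive_sk (k : nat) (x : R) :
  is_derive x 1 (fun y => sech y ^+ k) (- (k%:R * (sech x ^+ k * th x))).
Proof.
case: k => [|n].
  rewrite mul0r oppr0.
  have -> : (fun y : R => sech y ^+ 0) = cst 1 by apply/funext => y; rewrite expr0.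
  exact: is_derive_cst.
have := is_deriveX n.+1 (is_derive_sech x).
rewrite exprfctE => H; apply: is_derive_eq H _.
rewrite /GRing.scale /= exprSr; ring.
Qed.

Lemma is_derive_L (x : R) : is_derive x 1 L (- th x).
Proof.
have := @is_derive1_comp R (@ln R) (@sech R) x _ _ (is_derive1_ln (sech_gt0 x)) (is_derive_sech x).
move=> H; apply: is_derive_eq H _.
have s0 : sech x != 0 by rewrite gt_eqF // sech_gt0.
by field.
Qed.

Lemma der_sech (x : R) : derivable (@sech R) x 1. Proof. by have [] := is_derive_sech x. Qed.
Lemma der_th (x : R) : derivable th x 1. Proof. by have [] := is_derive_th x. Qed.
Lemma der_L (x : R) : derivable L x 1. Proof. by have [] := is_derive_L x. Qed.

Lemma cont_sech : continuous (@sech R). Proof. exact/der_cont/der_sech. Qed.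
Lemma cont_th : continuous th. Proof. exact/der_cont/der_th. Qed.
Lemma cont_L : continuous L. Proof. exact/der_cont/der_L. Qed.

Definition dom (f : R -> R) := exists C, forall x, `|f x| <= C * h x.
Definition bnd (f : R -> R) := exists M, forall x, `|f x| <= M.
Definition good (f : R -> R) := continuous f /\ dom f.

Lemma domD f g : dom f -> dom g -> dom (fun x => f x + g x).
Proof.
move=> [C fC] [D gD]; exists (C + D) => x.
by rewrite mulrDl; apply: le_trans (ler_normD _ _) _; apply: lerD.
Qed.

Lemma domN f : dom f -> dom (fun x => - f x).
Proof. by move=> [C fC]; exists C => x; rewrite normrN. Qed.

Lemma domB f g : dom f -> dom g -> dom (fun x => f x - g x).
Proof. by move=> df dg; apply: domD => //; apply: domN. Qed.

Lemma domMr f b : dom f -> bnd b -> dom (fun x => f x * b x).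
Proof.
move=> [C fC] [M bM]; exists (C * `|M|) => x.
rewrite normrM.
apply: le_trans (ler_pM (normr_ge0 _) (normr_ge0 _) (fC x) (le_trans (bM x) (ler_norm M))) _.
by rewrite mulrAC.
Qed.

Lemma domMl b f : bnd b -> dom f -> dom (fun x => b x * f x).
Proof.
move=> bb df; have := domMr df bb.
by move=> [C HC]; exists C => x; rewrite mulrC.
Qed.

Lemma bnd_cst (c : R) : bnd (fun _ => c).
Proof. by exists `|c|. Qed.

Lemma bndM f g : bnd f -> bnd g -> bnd (fun x => f x * g x).
Proof.
move=> [M fM] [N gN]; exists (`|M| * `|N|) => x; rewrite normrM.
apply: ler_pM; rewrite ?normr_ge0 //.
  exact: le_trans (fM x) (ler_norm _).
exact: le_trans (gN x) (ler_norm _).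
Qed.

Lemma bnd_cos : bnd (@cos R). Proof. by exists 1 => x; exact: cos_max. Qed.
Lemma bnd_sin : bnd (@sin R). Proof. by exists 1 => x; exact: sin_max. Qed.
Lemma bnd_th : bnd th.
Proof.
exists 1 => x.
have : th x ^+ 2 <= 1 by rewrite th2; have := sqr_ge0 (sech x); lra.
rewrite ler_norml expr2 => H; apply/andP; split; nra.
Qed.

Lemma dom_s (n : nat) : dom (fun x => sech x ^+ n.+1).
Proof.
exists 2 => x; have [s0 s1 s2 _] := key_bounds x.
rewrite ger0_norm ?(exprn_ge0 _ (ltW s0)) //; apply: le_trans _ s2.
by rewrite exprSr ler_piMl ?(exprn_ile1 _ (ltW s0) s1) ?(ltW s0).
Qed.

Lemma dom_sL (n : nat) : dom (fun x => sech x ^+ n.+1 * L x).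
Proof.
exists 4 => x; have [s0 s1 s2 s3] := key_bounds x.
rewrite normrM ger0_norm ?(exprn_ge0 _ (ltW s0)) //; apply: le_trans _ s3.
by rewrite ler_wpM2r ?normr_ge0 // exprSr ler_piMl ?(exprn_ile1 _ (ltW s0) s1) ?(ltW s0).
Qed.

Lemma goodD f g : good f -> good g -> good (fun x => f x + g x).
Proof. by move=> [cf df] [cg dg]; split; [move=> x; apply: cvgD; [exact: cf | exact: cg] | apply: domD]. Qed.
Lemma goodB f g : good f -> good g -> good (fun x => f x - g x).
Proof. by move=> [cf df] [cg dg]; split; [move=> x; apply: cvgB; [exact: cf | exact: cg] | apply: domB]. Qed.
Lemma goodZ (c : R) f : good f -> good (fun x => c * f x).
Proof.
move=> [cf df]; split; first by move=> x; apply: cvgM; [exact: cvg_cst | exact: cf].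
exact: (domMl (bnd_cst c) df).
Qed.

Lemma good_int f : good f -> mu.-integrable setT (EFin \o f).
Proof. by move=> [cf [C fC]]; exact: (@int_dom f C). Qed.

Lemma cont_sk k : continuous (fun y : R => sech y ^+ k).
Proof. by apply: der_cont => x; have [] := is_derive_sk k x. Qed.

Definition P (k : nat) (x : R) := sech x ^+ k * cos x.
Definition Q (k : nat) (x : R) := sech x ^+ k * ln (sech x) * cos x.

Lemma goodP n : good (P n.+1).
Proof.
split.
  move=> x; apply: cvgM; last exact: continuous_cos.
  exact: cont_sk.
by apply: domMr; [exact: dom_s | exact: bnd_cos].
Qed.

Lemma goodQ n : good (Q n.+1).
Proof.
split.
  move=> x; apply: cvgM; last exact: continuous_cos.
  apply: cvgM; last exact: cont_L.
  exact: cont_sk.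
by apply: domMr; [exact: dom_sL | exact: bnd_cos].
Qed.

Lemma key' (f g g1 g2 : R -> R) :
  (forall x : R, is_derive x 1 g (g1 x)) -> (forall x : R, is_derive x 1 g1 (g2 x)) ->
  (forall x, f x = (g2 x + g x) * cos x) -> good f ->
  (forall x, f (- x) = f x) -> dom g -> dom g1 -> g1 0 = 0 ->
  \int[mu]_x f x = 0.
Proof.
move=> dg dg1 fE [cf [C fC]] fN [Cg gC] [Cg1 g1C] g10.
exact: (key dg dg1 fE cf fN fC gC g1C g10).
Qed.

Lemma lin2 (f1 f2 : R -> R) (a b : R) : good f1 -> good f2 ->
  \int[mu]_x (a * f1 x - b * f2 x) = a * \int[mu]_x f1 x - b * \int[mu]_x f2 x.
Proof.
move=> g1 g2.
rewrite RintegralB //; try exact/good_int/goodZ.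
by rewrite !RintegralZl //; exact: good_int.
Qed.

Lemma lin4 (f1 f2 f3 f4 : R -> R) (a b c d : R) : good f1 -> good f2 -> good f3 -> good f4 ->
  \int[mu]_x (a * f1 x - b * f2 x + (c * f3 x - d * f4 x)) =
  (a * \int[mu]_x f1 x - b * \int[mu]_x f2 x) + (c * \int[mu]_x f3 x - d * \int[mu]_x f4 x).
Proof.
move=> g1 g2 g3 g4.
rewrite RintegralD //; first by rewrite !lin2.
all: by apply: good_int; apply: goodB; apply: goodZ.
Qed.

Lemma th0 : th 0 = 0 :> R.
Proof. by rewrite /th oppr0 subrr mul0r. Qed.

Lemma sk2 (k : nat) (x : R) : sech x ^+ k.+2 = sech x ^+ k * sech x ^+ 2.
Proof. by rewrite -addn2 exprD. Qed.

Lemma recP (n : nat) : let k : R := n.+1%:R in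
  (k ^+ 2 + 1) * \int[mu]_x P n.+1 x - k * (k + 1) * \int[mu]_x P n.+3 x = 0.
Proof.
move=> k.
rewrite -lin2; [|exact: goodP|exact: goodP].
apply: (@key' _ (fun y => sech y ^+ n.+1)
  (fun y => - (k * (sech y ^+ n.+1 * th y)))
  (fun y => k ^+ 2 * (sech y ^+ n.+1 * th y ^+ 2) - k * sech y ^+ n.+3)).
- exact: is_derive_sk.
- move=> x.
  have := is_deriveN (is_deriveM (is_derive_cst k x 1) (is_deriveM (is_derive_sk n.+1 x) (is_derive_th x))).
  move=> H; apply: is_derive_eq H _.
  rewrite /GRing.scale /= mulr0 addr0 (sk2 n.+1 x) /k; ring.
- move=> x; rewrite /P (sk2 n.+1 x) th2 /k; ring.
- by apply: goodB; apply: goodZ; exact: goodP.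
- by move=> x; rewrite /P sechN cosN.
- exact: dom_s.
- apply: domN; apply: (domMl (bnd_cst _)); apply: domMr; [exact: dom_s | exact: bnd_th].
- by rewrite th0 !mulr0 oppr0.
Qed.

Lemma recQ (n : nat) : let k : R := n.+1%:R in
  (k ^+ 2 + 1) * \int[mu]_x Q n.+1 x - k * (k + 1) * \int[mu]_x Q n.+3 x +
  (2 * k * \int[mu]_x P n.+1 x - (2 * k + 1) * \int[mu]_x P n.+3 x) = 0.
Proof.
move=> k.
rewrite -lin4; [|exact: goodQ|exact: goodQ|exact: goodP|exact: goodP].
apply: (@key' _ (fun y => sech y ^+ n.+1 * L y)
  (fun y => - (sech y ^+ n.+1 * th y) * (1 + k * L y))
  (fun y => - (sech y ^+ n.+3 - k * (sech y ^+ n.+1 * th y ^+ 2)) * (1 + k * L y)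
            + k * (sech y ^+ n.+1 * th y ^+ 2))).
- move=> x.
  have := is_deriveM (is_derive_sk n.+1 x) (is_derive_L x).
  move=> H; apply: is_derive_eq H _.
  rewrite /GRing.scale /= /k; ring.
- move=> x.
  have := is_deriveM (is_deriveN (is_deriveM (is_derive_sk n.+1 x) (is_derive_th x)))
     (is_deriveD (is_derive_cst (1 : R) x 1) (is_deriveM (is_derive_cst k x 1) (is_derive_L x))).
  move=> H; apply: is_derive_eq H _.
  rewrite /GRing.scale /= !mulr0 !addr0 add0r (sk2 n.+1 x) /k.
  rewrite !fctE /=; ring.
- move=> x; rewrite /P /Q /L (sk2 n.+1 x) th2 /k; ring.
- apply: goodD; apply: goodB; apply: goodZ; [exact: goodQ|exact: goodQ|exact: goodP|exact: goodP].
- by move=> x; rewrite /P /Q sechN cosN.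
- exact: dom_sL.
- have -> : (fun y => - (sech y ^+ n.+1 * th y) * (1 + k * L y)) =
            (fun y => - (sech y ^+ n.+1 * th y) - k * ((sech y ^+ n.+1 * L y) * th y)).
    by apply/funext => y; ring.
  apply: domB.
    by apply: domN; apply: domMr; [exact: dom_s | exact: bnd_th].
  by apply: (domMl (bnd_cst _)); apply: domMr; [exact: dom_sL | exact: bnd_th].
- by rewrite th0 !mulr0 oppr0 mul0r.
Qed.
End S.

Theorem lemma3p2 (R : realType) :
  [/\ q_ R 3 = q_ R 1 - 2^-1 * p_ R 1,
      q_ R 5 = 5 / 6 * q_ R 1 - 29 / 72 * p_ R 1
    & q_ R 7 = 13 / 18 * q_ R 1 - 121 / 360 * p_ R 1].
Proof.
have r0 := @recP R 0; have r2 := @recP R 2; have r4 := @recP R 4.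
have s0 := @recQ R 0; have s2 := @recQ R 2; have s4 := @recQ R 4.
rewrite /= in r0 r2 r4 s0 s2 s4.
have pE k : p_ R k = \int[lebesgue_measure]_x P k x by [].
have qE k : q_ R k = \int[lebesgue_measure]_x Q k x by [].
rewrite !pE !qE.
split; lra.
Qed.
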